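(* The sets $S^1_3$ and $T^1_3$ are finite, where $S^1_3=\{(k,a,b)\in(\mathbb{R}\setminus A_3)\times\mathbb{R}\times\mathbb{R}: \mathrm{rank}(A^{(k,a,b)}_3)\le1,\ 4a^3+27b^2=0\}\setminus\{(k,0,0):k\in\mathbb{R}\}$ and $T^1_3=\{(k,a,b)\in(\mathbb{R}\setminus C_3)\times\mathbb{R}\times\mathbb{R}: \mathrm{rank}(B^{(k,a,b)}_3)\le1,\ 4a^3+27b^2=0\}\setminus\{(k,0,0):k\in\mathbb{R}\}$.
   Context: For real $k,a,b$, the generalized $k$-FL sequence is $S^{(a,b)}_{k,0}=2b$, $S^{(a,b)}_{k,1}=bk+a$, $S^{(a,b)}_{k,n}=kS^{(a,b)}_{k,n-1}+S^{(a,b)}_{k,n-2}$. $A^{(k,a,b)}_3=\begin{pmatrix}S_1&S_2&S_3\\-S_3&S_1&S_2\\-S_2&-S_3&S_1\end{pmatrix}$ and $B^{(k,a,b)}_3=\begin{pmatrix}S_1&S_2&S_3\\S_3&S_1&S_2\\S_2&S_3&S_1\end{pmatrix}$ with $S_i=S^{(a,b)}_{k,i}$. Define $f_m,g_m\in\mathbb{Z}[T]$ by $f_0=0,f_1=1,g_0=2,g_1=T$, $f_m=Tf_{m-1}+f_{m-2}$, $g_m=Tg_{m-1}+g_{m-2}$; $F_n=f_{n+1}-f_n$, $G_n=g_{n+1}-g_n$, $P_n=f_{n+1}+f_n$, $Q_n=g_{n+1}+g_n$. $A_3=\{k: F_3(k)+1=0\text{ or }G_3(k)+k-2=0\}$ and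 $C_3=\{k: P_3(k)-1=0\text{ or }Q_3(k)-k-2=0\}$ (both contain $0$). The condition $4a^3+27b^2=0$ means the curve $y^2=x^3+ax+b$ is singular. *)

(* Defs.v *)
From HB Require Import structures.
From mathcomp Require Import all_boot all_order all_algebra.
From mathcomp Require Import classical_sets cardinality reals.
Set Implicit Arguments. Unset Strict Implicit. Unset Printing Implicit Defensive.
Import Order.TTheory GRing.Theory Num.Theory.
Local Open Scope ring_scope.

Fixpoint lucas_seq (V : nzRingType) (c u0 u1 : V) (n : nat) : V :=
  match n with
  | 0%N => u0
  | S p => match p with
           | 0%N => u1
           | S q => c * lucas_seq c u0 u1 p + lucas_seq c u0 u1 q
           end
  end.

Definition fpoly (m : nat) : {poly int} := lucas_seq 'X 0 1 m.
Definition gpoly (m : nat) : {poly int} := lucas_seq 'X 2%:P 'X m.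

Definition Fpoly (n : nat) : {poly int} := fpoly n.+1 - fpoly n.
Definition Gpoly (n : nat) : {poly int} := gpoly n.+1 - gpoly n.
Definition Ppoly (n : nat) : {poly int} := fpoly n.+1 + fpoly n.
Definition Qpoly (n : nat) : {poly int} := gpoly n.+1 + gpoly n.

Definition evalZ (R : realType) (p : {poly int}) (k : R) : R :=
  (map_poly (fun z : int => z%:~R) p).[k].

Definition FLseq (R : realType) (k a b : R) (n : nat) : R :=
  lucas_seq k (2 * b) (b * k + a) n.

Definition A3 (R : realType) : set R :=
  [set k | evalZ (Fpoly 3) k + 1 = 0 \/ evalZ (Gpoly 3) k + k - 2 = 0].
Definition C3 (R : realType) : set R :=
  [set k | evalZ (Ppoly 3) k - 1 = 0 \/ evalZ (Qpoly 3) k - k - 2 = 0].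

Definition Amat (R : realType) (k a b : R) : 'M[R]_3 :=
  let S := FLseq k a b in
  \matrix_(i < 3, j < 3)
    match nat_of_ord i, nat_of_ord j with
    | 0%N, 0%N => S 1%N | 0%N, 1%N => S 2%N | 0%N, _ => S 3%N
    | 1%N, 0%N => - S 3%N | 1%N, 1%N => S 1%N | 1%N, _ => S 2%N
    | _, 0%N => - S 2%N | _, 1%N => - S 3%N | _, _ => S 1%N
    end.

Definition Bmat (R : realType) (k a b : R) : 'M[R]_3 :=
  let S := FLseq k a b in
  \matrix_(i < 3, j < 3)
    match nat_of_ord i, nat_of_ord j with
    | 0%N, 0%N => S 1%N | 0%N, 1%N => S 2%N | 0%N, _ => S 3%N
    | 1%N, 0%N => S 3%N | 1%N, 1%N => S 1%N | 1%N, _ => S 2%N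
    | _, 0%N => S 2%N | _, 1%N => S 3%N | _, _ => S 1%N
    end.

Definition S13 (R : realType) : set (R * R * R) :=
  [set x | let: (k, a, b) := x in
     ~ A3 k /\ (\rank (Amat k a b) <= 1)%N /\ 4 * a ^+ 3 + 27 * b ^+ 2 = 0
     /\ ~ (a = 0 /\ b = 0)].
Definition T13 (R : realType) : set (R * R * R) :=
  [set x | let: (k, a, b) := x in
     ~ C3 k /\ (\rank (Bmat k a b) <= 1)%N /\ 4 * a ^+ 3 + 27 * b ^+ 2 = 0
     /\ ~ (a = 0 /\ b = 0)].

(* Main.v *)
Require Import Defs.
From mathcomp Require Import all_boot all_order all_algebra.
From mathcomp Require Import classical_sets cardinality reals.
From mathcomp Require Import ring lra.
Import Order.TTheory GRing.Theory Num.Theory.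
Local Open Scope ring_scope.

Lemma minor0 (F : fieldType) (A : 'M[F]_3) (f g : 'I_2 -> 'I_3) :
  (\rank A <= 1)%N -> A (f 0) (g 0) * A (f 1) (g 1) - A (f 0) (g 1) * A (f 1) (g 0) = 0.
Proof.
move=> hr.
have hle : (\rank (mxsub f g A) <= \rank A)%N.
  have -> : mxsub f g A = rowsub f (colsub g A) by apply/matrixP=> i j; rewrite !mxE.
  apply: leq_trans (mxrankS (rowsub_sub _ _)) _.
  rewrite -mxrank_tr.
  have -> : (colsub g A)^T = rowsub g A^T by apply/matrixP=> i j; rewrite !mxE.
  by rewrite -[X in (_ <= X)%N]mxrank_tr mxrankS // rowsub_sub.
apply/eqP; apply: contraLR hr => hd.
have hu : mxsub f g A \in unitmx.
  rewrite unitmxE unitfE (expand_det_row _ 0) !big_ord_recl big_ord0 /cofactor.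
  rewrite !det_mx11 !mxE /=.
  rewrite (_ : lift 0 0 = 1 :> 'I_2); last by apply/val_inj.
  rewrite (_ : lift 1 0 = 0 :> 'I_2); last by apply/val_inj.
  rewrite (_ : ord0 = 0 :> 'I_2); last by apply/val_inj.
  apply: contra hd => /eqP h; apply/eqP; rewrite -h /bump /=; ring.
move: hle; rewrite (mxrank_unit hu) => h.
by rewrite -ltnNge; apply: leq_trans h.
Qed.
Lemma evalZ0 (R : realType) p : evalZ p (0 : R) = (p`_0)%:~R.
Proof. by rewrite /evalZ horner_coef0 coef_map. Qed.

Lemma A30 (R : realType) : A3 (0 : R).
Proof.
left; rewrite evalZ0 /Fpoly /fpoly /=.
rewrite !(coefB, coefD, coefXM, coef0, coef1, coefX, mulr1, mulr0, addr0, add0r) /=.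
by rewrite rmorphN /= addNr.
Qed.

Lemma C30 (R : realType) : C3 (0 : R).
Proof.
left; rewrite evalZ0 /Ppoly /fpoly /=.
rewrite !(coefB, coefD, coefXM, coef0, coef1, coefX, mulr1, mulr0, addr0, add0r) /=.
by rewrite subrr.
Qed.

Lemma sq3 (R : realFieldType) (x y z : R) : x ^+ 2 + y ^+ 2 + z ^+ 2 = 0 -> x = 0 /\ y = 0.
Proof.
move=> h.
have : x ^+ 2 + y ^+ 2 == 0 /\ z ^+ 2 == 0.
  by apply/andP; rewrite -paddr_eq0 ?h ?addr_ge0 ?sqr_ge0.
case=> /eqP/eqP; rewrite paddr_eq0 ?sqr_ge0 // !sqrf_eq0 => /andP[/eqP -> /eqP ->] _; done.
Qed.

Definition w2 : 'I_2 -> 'I_3 := widen_ord (leqnSn 2).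

Theorem lemma4p10 (R : realType) : finite_set (@S13 R) /\ finite_set (@T13 R).
Proof.
split.
  rewrite (_ : @S13 R = set0); first exact: finite_set0.
  apply/seteqP; split => [[[k a] b]|] //= [hk [hr [_ hab]]]; apply: hab.
  have m1 := @minor0 _ _ w2 w2 hr.
  have m2 := @minor0 _ _ w2 (lift 0) hr.
  have m3 := @minor0 _ _ w2 (lift 1) hr.
  rewrite !mxE /= in m1 m2 m3.
  have k0 : k != 0 by apply/eqP => k0; apply: hk; rewrite k0; exact: A30.
  move: m1 m2 m3; rewrite /FLseq /=.
  set s1 := b * k + a; set s2 := k * s1 + 2 * b; set s3 := k * s2 + s1.
  move=> m1 m2 m3.
  have [e1' e2'] : s1 + s2 = 0 /\ s3 - s1 = 0.
    apply: (@sq3 _ _ _ (- s2 - s3)).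
    have -> : (s1 + s2) ^+ 2 + (s3 - s1) ^+ 2 + (- s2 - s3) ^+ 2 =
      2 * ((s1 * s1 - s2 * - s3) + (s2 * s2 - s3 * s1) + (s1 * s2 - s3 * - s3)) by ring.
    by rewrite m1 m2 m3; ring.
  have e1 : s1 = - s2 by lra.
  have e2 : s3 = s1 by lra.
  have : k * s2 = 0 by rewrite /s3 in e2; lra.
  move/eqP; rewrite mulf_eq0 (negbTE k0) /= => /eqP hs2.
  have hs1 : s1 = 0 by rewrite e1 hs2 oppr0.
  have hb : b = 0 by move: hs2; rewrite /s2 hs1; lra.
  by split => //; move: hs1; rewrite /s1 hb; lra.
rewrite (_ : @T13 R = set0); first exact: finite_set0.
apply/seteqP; split => [[[k a] b]|] //= [hk [hr [_ hab]]]; apply: hab.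
have m1 := @minor0 _ _ w2 w2 hr.
have m2 := @minor0 _ _ w2 (lift 0) hr.
have m3 := @minor0 _ _ w2 (lift 1) hr.
rewrite !mxE /= in m1 m2 m3.
have k0 : k != 0 by apply/eqP => k0; apply: hk; rewrite k0; exact: C30.
move: m1 m2 m3; rewrite /FLseq /=.
set s1 := b * k + a; set s2 := k * s1 + 2 * b; set s3 := k * s2 + s1.
move=> m1 m2 m3.
have [e1' e2'] : s1 - s2 = 0 /\ s3 - s1 = 0.
  apply: (@sq3 _ _ _ (s2 - s3)).
  have -> : (s1 - s2) ^+ 2 + (s3 - s1) ^+ 2 + (s2 - s3) ^+ 2 =
    2 * ((s1 * s1 - s2 * s3) + (s2 * s2 - s3 * s1) - (s1 * s2 - s3 * s3)) by ring.
  by rewrite m1 m2 m3; ring.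
have e1 : s1 = s2 by lra.
have e2 : s3 = s1 by lra.
have : k * s2 = 0 by rewrite /s3 in e2; lra.
move/eqP; rewrite mulf_eq0 (negbTE k0) /= => /eqP hs2.
have hs1 : s1 = 0 by rewrite e1 hs2.
have hb : b = 0 by move: hs2; rewrite /s2 hs1; lra.
by split => //; move: hs1; rewrite /s1 hb; lra.
Qed.
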